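(* Let $\mathcal{K}^{\langle\infty\rangle}$ be a planar unbounded simple nested fractal, let $M\in\mathbb{Z}$ and let $\ell_{M,0}:V_M^{\langle M\rangle}\to\mathcal{A}$ be a bijection. Then $\mathcal{K}^{\langle\infty\rangle}$ has the good labelling property if and only if there exists an extension $\widetilde{\ell}_{M,0}:V_M^{\langle M+1\rangle}\to\mathcal{A}$ of $\ell_{M,0}$ such that for every $M$-complex $\Delta_M\subset\mathcal{K}^{\langle M+1\rangle}$, written as $\Delta_M=\mathcal{K}^{\langle M\rangle}+L^{M+1}\nu_{i}$ with $i\in\{1,\dots,N\}$, there exists a rotation $R_{\Delta_M}\in\mathcal{R}_M$ with $$\widetilde{\ell}_{M,0}\big(R_{\Delta_M}(v-L^{M+1}\nu_{i})\big)=\widetilde{\ell}_{M,0}(v),\qquad v\in V(\Delta_M).$$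
   Context: Setting: $L>1$, $N\ge2$, $\nu_1=0,\dots,\nu_N\in\mathbb{R}^2$, $\Psi_i(x)=x/L+\nu_i$, and $\mathcal{K}^{\langle 0\rangle}=\bigcup_i\Psi_i(\mathcal{K}^{\langle 0\rangle})$ is a planar simple nested fractal (essential fixed points $V_0^{\langle0\rangle}$: fixed points $x$ for which there are another fixed point $y$ and $\Psi_i\ne\Psi_j$ with $\Psi_i(x)=\Psi_j(y)$; open set condition, nesting $\Psi_i(\mathcal{K}^{\langle 0\rangle})\cap\Psi_j(\mathcal{K}^{\langle 0\rangle})=\Psi_i(V_0^{\langle 0\rangle})\cap\Psi_j(V_0^{\langle 0\rangle})$ for $i\ne j$, symmetry with respect to perpendicular bisectors of pairs of essential fixed points, and connectivity). Let $k=\#V_0^{\langle0\rangle}\ge3$; $V_0^{\langle0\rangle}$ spans a regular $k$-gon. $\mathcal{K}^{\langle M\rangle}=L^M\mathcal{K}^{\langle 0\rangle}$ ($M\in\mathbb{Z}$), $\mathcal{K}^{\langle\infty\rangle}=\bigcup_{M\ge0}\mathcal{K}^{\langle M\rangle}$. An $M$-complex is $\Delta_M=\mathcal{K}^{\langle M\rangle}+\nu_{\Delta_M}$, $\nu_{\Delta_M}=\sum_{j=M+1}^{J}L^j\nu_{i_j}$ ($J\ge M+1$), with vertex set $V(\Delta_M)=L^MV_0^{\langle0\rangle}+\nu_{\Delta_M}$. $V_M^{\langle M\rangle}=L^MV_0^{\langle0\rangle}$; $V_M^{\langle M+1\rangle}$ is the union of $V(\Delta_M)$ over $M$-complexes $\Delta_M\subset\mathcal{K}^{\langle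 M+1\rangle}$; $V_M^{\langle\infty\rangle}$ is the union of $V(\Delta_M)$ over all $M$-complexes. $\mathcal{A}$ is an alphabet of $k$ symbols; $\mathcal{R}_M$ is the set of the $k$ rotations about the barycenter of $\mathcal{K}^{\langle M\rangle}$ mapping $V_M^{\langle M\rangle}$ onto itself. A good labelling function of order $M$ is $\ell_M:V_M^{\langle\infty\rangle}\to\mathcal{A}$ that is bijective on $V_M^{\langle M\rangle}$ and such that for each $M$-complex $\Delta_M=\mathcal{K}^{\langle M\rangle}+\nu_{\Delta_M}$ there is $R_{\Delta_M}\in\mathcal{R}_M$ with $\ell_M(v)=\ell_M(R_{\Delta_M}(v-\nu_{\Delta_M}))$, $v\in V(\Delta_M)$. $\mathcal{K}^{\langle\infty\rangle}$ has the good labelling property if a good labelling function of some order exists. *)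

(* Defs.v *)
From HB Require Import structures.
From mathcomp Require Import all_boot all_order all_algebra.
From mathcomp Require Import all_classical all_reals all_analysis.
Set Implicit Arguments. Unset Strict Implicit. Unset Printing Implicit Defensive.
Import Order.TTheory GRing.Theory Num.Theory.
Import numFieldNormedType.Exports.
Local Open Scope classical_set_scope.
Local Open Scope ring_scope.

Section NestedFractal.
Variable R : realType.
Local Notation pt := (R * R)%type.

Definition sc (c : R) (p : pt) : pt := (c * p.1, c * p.2).

Definition dotp (p q : pt) : R := p.1 * q.1 + p.2 * q.2.

Definition bisector_reflection (x y : pt) (z : pt) : pt :=
  let d := y - x in
  let m := sc 2^-1 (x + y) in
  z - sc ((2 * dotp (z - m) d) / dotp d d) d.

Definition rot (a b : R) (p : pt) : pt := (a * p.1 - b * p.2, b * p.1 + a * p.2).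

Variables (L : R) (N : nat) (nu : 'I_N -> pt).

Definition Psi (i : 'I_N) (x : pt) : pt := sc L^-1 x + nu i.

Definition fixed_points : set pt := [set x | exists i, Psi i x = x].

Definition V00 : set pt :=
  [set x | fixed_points x /\
     exists y i j, [/\ fixed_points y, y <> x, Psi i <> Psi j & Psi i x = Psi j y]].

Definition Vm1 : set pt := [set x | exists i, (Psi i @` V00) x].
Definition Em1 (x y : pt) : Prop := exists i, (Psi i @` V00) x /\ (Psi i @` V00) y.

Definition simple_nested_fractal (K : set pt) : Prop :=
  [/\ [/\ 1 < L, (2 <= N)%N & (forall i : 'I_N, val i = 0%N -> nu i = 0)],
      [/\ compact K, K !=set0 & K = [set x | exists i, (Psi i @` K) x]],
      [/\
      (exists U : set pt, [/\ open U, U !=set0,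
          (exists r : R, forall p, U p -> `|p.1| <= r /\ `|p.2| <= r),
          (forall i, Psi i @` U `<=` U) &
          (forall i j, i != j -> Psi i @` U `&` Psi j @` U = set0)]),
      (forall i j, i != j -> Psi i @` K `&` Psi j @` K = Psi i @` V00 `&` Psi j @` V00) &
      (forall x y, V00 x -> V00 y -> x <> y -> forall i, exists j,
          bisector_reflection x y @` (Psi i @` V00) = Psi j @` V00)] &
      [/\
        (forall x y, Vm1 x -> Vm1 y -> exists (n : nat) (s : nat -> pt),
           [/\ s 0%N = x, s n = y & forall m, (m < n)%N -> Em1 (s m) (s m.+1)]) &
        (exists x y z, [/\ V00 x, V00 y, V00 z & [/\ x <> y, y <> z & x <> z]]) ]].

Definition VMM (M : int) : set pt := (fun x => sc (L ^ M) x) @` V00.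

Definition Vcx (M : int) (t : pt) : set pt := (fun x => sc (L ^ M) x + t) @` V00.

Definition complex_shift (M : int) (t : pt) : Prop :=
  exists (n : nat) (w : nat -> 'I_N),
    t = \sum_(j < n.+1) sc (L ^ (M + 1 + (j : nat)%:Z)) (nu (w j)).

Definition VMM1 (M : int) : set pt :=
  [set v | exists i : 'I_N, Vcx M (sc (L ^ (M + 1)) (nu i)) v].

Definition VMinf (M : int) : set pt :=
  [set v | exists t, complex_shift M t /\ Vcx M t v].

(* Barycenter of V_M^<M> (= barycenter of K^<M>): average of its vertices,
   the essential fixed points being the points (L/(L-1)) nu_i. *)
Definition fixpt (i : 'I_N) : pt := sc (L / (L - 1)) (nu i).
Definition ess_idx : {set 'I_N} := [set i | `[< V00 (fixpt i) >]].
Definition barycenter (M : int) : pt :=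
  sc (L ^ M) (sc (#|ess_idx|%:R)^-1 (\sum_(i in ess_idx) fixpt i)).

Definition RotM (M : int) (f : pt -> pt) : Prop :=
  exists a b : R, [/\ a ^+ 2 + b ^+ 2 = 1,
    f = (fun p => barycenter M + rot a b (p - barycenter M)) &
    f @` VMM M = VMM M].

Definition bij_onto (A : finType) (V : set pt) (l : pt -> A) : Prop :=
  (forall v w, V v -> V w -> l v = l w -> v = w) /\
  (forall a : A, exists v, V v /\ l v = a).

(* Good labelling function of order M (only its values on V_M^<oo> matter). *)
Definition good_labelling (A : finType) (M : int) (l : pt -> A) : Prop :=
  bij_onto (VMM M) l /\
  forall t, complex_shift M t ->
    exists f, RotM M f /\ forall v, Vcx M t v -> l v = l (f (v - t)).

Definition good_labelling_property (A : finType) : Prop :=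
  exists (M : int) (l : pt -> A), good_labelling M l.

End NestedFractal.

(* Main.v *)
Require Import Defs.
From HB Require Import structures.
From mathcomp Require Import all_boot all_order all_algebra.
From mathcomp Require Import all_classical all_reals all_analysis.
From mathcomp Require Import ring lra.
Import Order.TTheory GRing.Theory Num.Theory.
Import numFieldNormedType.Exports.
Set Implicit Arguments. Unset Strict Implicit. Unset Printing Implicit Defensive.
Local Open Scope classical_set_scope.
Local Open Scope ring_scope.
Section Alg.
Variable R : realType.

Lemma sq_eq0 (x y : R) : x ^+ 2 + y ^+ 2 = 0 -> x = 0 /\ y = 0.
Proof.
move=> h; have hx : x ^+ 2 = 0 by apply/eqP; rewrite eq_le sqr_ge0 andbT -h lerDl sqr_ge0.
move: h; rewrite hx add0r => /eqP; rewrite !expf_eq0 /= => /eqP ->.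
by move/eqP: hx; rewrite expf_eq0 /= => /eqP ->.
Qed.

Lemma circ3_real (a1 a2 b1 b2 X1 X2 w1 w2 : R) :
  (a1 != 0) || (a2 != 0) -> (b1 != 0) || (b2 != 0) -> (a1 != b1) || (a2 != b2) ->
  2 * (X1 * a1 + X2 * a2) + (a1 * a1 + a2 * a2) = 0 ->
  2 * (X1 * b1 + X2 * b2) + (b1 * b1 + b2 * b2) = 0 ->
  a1 * w1 + a2 * w2 = 0 -> b1 * w1 + b2 * w2 = 0 -> w1 = 0 /\ w2 = 0.
Proof.
move=> ha hb hab hXa hXb haw hbw.
have hc1 : w1 * (a1 * b2 - a2 * b1) = 0.
  have -> : w1 * (a1 * b2 - a2 * b1) = (a1 * w1 + a2 * w2) * b2 - a2 * (b1 * w1 + b2 * w2) by ring.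
  by rewrite haw hbw; ring.
have hc2 : w2 * (a1 * b2 - a2 * b1) = 0.
  have -> : w2 * (a1 * b2 - a2 * b1) = a1 * (b1 * w1 + b2 * w2) - (a1 * w1 + a2 * w2) * b1 by ring.
  by rewrite haw hbw; ring.
case: (boolP ((w1 == 0) && (w2 == 0))) => [/andP[/eqP -> /eqP ->] // | hw].
have hc : a1 * b2 - a2 * b1 = 0.
  move: hw; rewrite negb_and => /orP[] hw.
    by move/eqP: hc1; rewrite mulf_eq0 (negbTE hw) /= => /eqP.
  by move/eqP: hc2; rewrite mulf_eq0 (negbTE hw) /= => /eqP.
exfalso.
have naa : a1 * a1 + a2 * a2 != 0.
  apply/negP => /eqP h; have [h1 h2] : a1 = 0 /\ a2 = 0 by apply: sq_eq0; rewrite !expr2.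
  by move: ha; rewrite h1 h2 eqxx.
have nbb : b1 * b1 + b2 * b2 != 0.
  apply/negP => /eqP h; have [h1 h2] : b1 = 0 /\ b2 = 0 by apply: sq_eq0; rewrite !expr2.
  by move: hb; rewrite h1 h2 eqxx.
set aa := a1 * a1 + a2 * a2 in hXa naa *.
set bb := b1 * b1 + b2 * b2 in hXb nbb *.
set ab := a1 * b1 + a2 * b2.
have e1 : aa * b1 = ab * a1 + (- a2) * (a1 * b2 - a2 * b1) by rewrite /aa /ab; ring.
have e2 : aa * b2 = ab * a2 + a1 * (a1 * b2 - a2 * b1) by rewrite /aa /ab; ring.
rewrite hc !mulr0 !addr0 in e1 e2.
have e3 : aa * (X1 * b1 + X2 * b2) = ab * (X1 * a1 + X2 * a2).
  by rewrite mulrDr !mulrA ![aa * _]mulrC -!mulrA e1 e2; ring.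
have hb2 : bb = ab.
  have h1 : 2 * (X1 * b1 + X2 * b2) = - bb by apply/eqP; rewrite -subr_eq0 opprK hXb.
  have h2 : 2 * (X1 * a1 + X2 * a2) = - aa by apply/eqP; rewrite -subr_eq0 opprK hXa.
  apply: (mulfI naa).
  have -> : aa * bb = - (aa * (2 * (X1 * b1 + X2 * b2))) by rewrite h1; ring.
  have -> : aa * ab = - (ab * (2 * (X1 * a1 + X2 * a2))) by rewrite h2; ring.
  by rewrite [aa * _]mulrCA [ab * _]mulrCA e3.
have lag : aa * bb = ab ^+ 2 + (a1 * b2 - a2 * b1) ^+ 2 by rewrite /aa /bb /ab; ring.
rewrite hc expr0n /= addr0 -hb2 expr2 in lag.
have haabb : aa = bb by apply: (mulIf nbb).
have : (a1 - b1) ^+ 2 + (a2 - b2) ^+ 2 = 0.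
  have -> : (a1 - b1) ^+ 2 + (a2 - b2) ^+ 2 = aa - 2 * ab + bb by rewrite /aa /ab /bb; ring.
  by rewrite -hb2 haabb; ring.
move/sq_eq0 => [/eqP h1 /eqP h2]; move: hab; rewrite -subr_eq0 h1 -subr_eq0 h2.
by [].
Qed.
End Alg.

Section Geo.
Variable R : realType.
Local Notation pt := (R * R)%type.
Local Notation S := (@bisector_reflection R).

Definition refm (P Q : R) (w : pt) : pt := (P * w.1 + Q * w.2, Q * w.1 - P * w.2).
Definition dist2 (p q : pt) : R := dotp (p - q) (p - q).
Definition sP (x y : pt) : R :=
  ((y - x).2 * (y - x).2 - (y - x).1 * (y - x).1) / dotp (y - x) (y - x).
Definition sQ (x y : pt) : R :=
  - (2 * (y - x).1 * (y - x).2) / dotp (y - x) (y - x).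

Lemma pt_neq0 (d : pt) : d != 0 -> d.1 * d.1 + d.2 * d.2 != 0.
Proof.
case: d => d1 d2 /= hd; apply/negP => /eqP h.
have [h1 h2] : d1 = 0 /\ d2 = 0 by apply: sq_eq0; rewrite !expr2.
by move: hd; rewrite h1 h2 eqxx.
Qed.

Lemma neq_sub (x y : pt) : x != y -> y - x != 0.
Proof. by move=> h; rewrite subr_eq0 eq_sym. Qed.

Ltac ptsplit := apply/pair_equal_spec; split => /=.

Lemma S_diff (x y p q : pt) : x != y ->
  S x y p - S x y q = refm (sP x y) (sQ x y) (p - q).
Proof.
move=> /neq_sub/pt_neq0; case: x y p q => [x1 x2] [y1 y2] [p1 p2] [q1 q2] /= h.
rewrite /bisector_reflection /refm /sP /sQ /dotp /sc /=.
by ptsplit; field.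
Qed.

Lemma S_x (x y : pt) : x != y -> S x y x = y.
Proof.
move=> /neq_sub/pt_neq0; case: x y => [x1 x2] [y1 y2] /= h.
rewrite /bisector_reflection /dotp /sc /=.
by ptsplit; field.
Qed.

Lemma S_fix (x y P : pt) : x != y -> dist2 P x = dist2 P y -> S x y P = P.
Proof.
move=> /neq_sub/pt_neq0; case: x y P => [x1 x2] [y1 y2] [P1 P2] /= h.
rewrite /bisector_reflection /dist2 /dotp /sc /= => e.
have e' : 2 * (((P1 - 2^-1 * (x1 + y1)) * (y1 - x1) + (P2 - 2^-1 * (x2 + y2)) * (y2 - x2))) = 0.
  have -> : 2 * (((P1 - 2^-1 * (x1 + y1)) * (y1 - x1) + (P2 - 2^-1 * (x2 + y2)) * (y2 - x2)))
    = ((P1 - x1) * (P1 - x1) + (P2 - x2) * (P2 - x2)) - ((P1 - y1) * (P1 - y1) + (P2 - y2) * (P2 - y2)) by field.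
  by rewrite e subrr.
by rewrite e' !mul0r; ptsplit; rewrite subr0.
Qed.

Lemma S_fixE (x y P : pt) : x != y -> S x y P = P -> dist2 P x = dist2 P y.
Proof.
move=> /neq_sub/pt_neq0; case: x y P => [x1 x2] [y1 y2] [P1 P2] /= h.
rewrite /bisector_reflection /dist2 /dotp /sc /= => /pair_equal_spec [e1 e2].
set k := (2 * _ / _) in e1 e2.
have hk : k = 0.
  move/eqP: e1; rewrite subr_eq addrC -subr_eq subrr eq_sym mulf_eq0 => /orP[/eqP //|h1].
  move/eqP: e2; rewrite subr_eq addrC -subr_eq subrr eq_sym mulf_eq0 => /orP[/eqP //|h2].
  by move: h; rewrite subr_eq0 in h1; rewrite subr_eq0 in h2; rewrite (eqP h1) (eqP h2) !subrr mul0r addr0 eqxx.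
move: hk; rewrite /k => /eqP; rewrite mulf_eq0 invr_eq0 (negbTE h) orbF mulf_eq0 pnatr_eq0 /= => /eqP hk.
apply/eqP; rewrite -subr_eq0; apply/eqP; rewrite -[RHS](mulr0 2) -hk.
by field.
Qed.

Lemma S_invol (x y p : pt) : x != y -> S x y (S x y p) = p.
Proof.
move=> /neq_sub/pt_neq0; case: x y p => [x1 x2] [y1 y2] [p1 p2] /= h.
rewrite /bisector_reflection /dotp /sc /=.
by ptsplit; field.
Qed.

Lemma refm_norm P Q (w : pt) : dotp (refm P Q w) (refm P Q w) = (P ^+ 2 + Q ^+ 2) * dotp w w.
Proof. by case: w => w1 w2; rewrite /refm /dotp /=; ring. Qed.

Lemma rot_norm a b (w : pt) : dotp (Defs.rot a b w) (Defs.rot a b w) = (a ^+ 2 + b ^+ 2) * dotp w w.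
Proof. by case: w => w1 w2; rewrite /Defs.rot /dotp /=; ring. Qed.

Lemma sPQ_norm (x y : pt) : x != y -> sP x y ^+ 2 + sQ x y ^+ 2 = 1.
Proof.
move=> /neq_sub/pt_neq0; case: x y => [x1 x2] [y1 y2] /= h.
by rewrite /sP /sQ /dotp /=; field.
Qed.

Lemma S_iso (x y p q : pt) : x != y -> dist2 (S x y p) (S x y q) = dist2 p q.
Proof. by move=> h; rewrite /dist2 S_diff // refm_norm sPQ_norm // mul1r. Qed.

Lemma rot_refm a b P Q (w : pt) : Defs.rot a b (refm P Q w) = refm (a * P - b * Q) (a * Q + b * P) w.
Proof. by case: w => w1 w2; rewrite /refm /Defs.rot /=; ptsplit; ring. Qed.

Lemma refm_inj P Q P' Q' (w : pt) : w != 0 -> refm P Q w = refm P' Q' w -> P = P' /\ Q = Q'.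
Proof.
move=> /pt_neq0; case: w => w1 w2 /= hw /pair_equal_spec [e1 e2].
have h1 : (P - P') * (w1 * w1 + w2 * w2) = 0.
  have -> : (P - P') * (w1 * w1 + w2 * w2) = (P * w1 + Q * w2 - (P' * w1 + Q' * w2)) * w1 - (Q * w1 - P * w2 - (Q' * w1 - P' * w2)) * w2 by ring.
  by rewrite e1 e2 !subrr; ring.
have h2 : (Q - Q') * (w1 * w1 + w2 * w2) = 0.
  have -> : (Q - Q') * (w1 * w1 + w2 * w2) = (P * w1 + Q * w2 - (P' * w1 + Q' * w2)) * w2 + (Q * w1 - P * w2 - (Q' * w1 - P' * w2)) * w1 by ring.
  by rewrite e1 e2 !subrr; ring.
move/eqP: h1; rewrite mulf_eq0 (negbTE hw) orbF subr_eq0 => /eqP ->.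
by move/eqP: h2; rewrite mulf_eq0 (negbTE hw) orbF subr_eq0 => /eqP ->.
Qed.

Lemma rot_fix a b (w : pt) : a ^+ 2 + b ^+ 2 = 1 -> (a != 1) || (b != 0) ->
  Defs.rot a b w = w -> w = 0.
Proof.
case: w => w1 w2 hn hab /pair_equal_spec [/= e1 e2].
have hd : (a - 1) ^+ 2 + b ^+ 2 != 0.
  apply/negP => /eqP /sq_eq0 [h1 h2]; move: hab; rewrite h2 eqxx orbF.
  by move/eqP: h1; rewrite subr_eq0 => ->.
have h1 : ((a - 1) ^+ 2 + b ^+ 2) * w1 = 0.
  have -> : ((a - 1) ^+ 2 + b ^+ 2) * w1 = (a - 1) * (a * w1 - b * w2 - w1) + b * (b * w1 + a * w2 - w2) by ring.
  by rewrite e1 e2 !subrr; ring.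
have h2 : ((a - 1) ^+ 2 + b ^+ 2) * w2 = 0.
  have -> : ((a - 1) ^+ 2 + b ^+ 2) * w2 = (a - 1) * (b * w1 + a * w2 - w2) - b * (a * w1 - b * w2 - w1) by ring.
  by rewrite e1 e2 !subrr; ring.
move/eqP: h1; rewrite mulf_eq0 (negbTE hd) /= => /eqP ->.
by move/eqP: h2; rewrite mulf_eq0 (negbTE hd) /= => /eqP ->.
Qed.

Lemma circ3 (P z1 z2 z3 w : pt) r : z1 != z2 -> z1 != z3 -> z2 != z3 ->
  dist2 z1 P = r -> dist2 z2 P = r -> dist2 z3 P = r ->
  dotp (z2 - z1) w = 0 -> dotp (z3 - z1) w = 0 -> w = 0.
Proof.
case: P z1 z2 z3 w => [P1 P2] [x1 x2] [y1 y2] [z1 z2] [w1 w2].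
rewrite /dist2 /dotp /= => h12 h13 h23 e1 e2 e3 hw1 hw2.
have [-> ->] : w1 = 0 /\ w2 = 0; last by [].
apply: (@circ3_real _ (y1 - x1) (y2 - x2) (z1 - x1) (z2 - x2) (x1 - P1) (x2 - P2)) => //.
- by move: h12; rewrite eq_sym -subr_eq0 => /pt_neq0 /=; apply: contraNT; rewrite negb_or !negbK => /andP[/eqP -> /eqP ->]; rewrite mul0r addr0.
- by move: h13; rewrite eq_sym -subr_eq0 => /pt_neq0 /=; apply: contraNT; rewrite negb_or !negbK => /andP[/eqP -> /eqP ->]; rewrite mul0r addr0.
- apply: contraNT h23; rewrite negb_or !negbK => /andP[/eqP h1 /eqP h2].
  by apply/eqP/pair_equal_spec; split; [exact: (addIr (- x1) h1)| exact: (addIr (- x2) h2)].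
- by rewrite -e1 in e2; nra.
- by rewrite -e1 in e3; nra.
Qed.

End Geo.

Section Frac.
Variables (R : realType) (L : R) (N : nat) (nu : 'I_N -> (R * R)%type) (K : set (R * R)%type).
Local Notation pt := (R * R)%type.
Local Notation S := (@bisector_reflection R).
Local Notation Ps := (Psi L nu).
Local Notation V0 := (V00 L nu).
Local Notation E := (ess_idx L nu).
Local Notation fp := (fixpt L nu).

Hypothesis HL : 1 < L.
Hypothesis Hnu : injective nu.
Hypothesis Hsym : forall x y, V0 x -> V0 y -> x <> y -> forall i, exists j,
          S x y @` (Ps i @` V0) = Ps j @` V0.
Hypothesis H3 : exists x y z, [/\ V0 x, V0 y, V0 z & [/\ x <> y, y <> z & x <> z]].

Lemma scE c (p : pt) : sc c p = c *: p.
Proof. by case: p. Qed.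

Lemma L_neq0 : L != 0.
Proof. by apply: lt0r_neq0; apply: lt_trans HL. Qed.

Lemma L1_neq0 : L - 1 != 0.
Proof. by rewrite subr_eq0 gt_eqF. Qed.

Lemma PsE i (x : pt) : Ps i x = L^-1 *: x + nu i.
Proof. by rewrite /Psi scE. Qed.

Lemma Ps_inj i : injective (Ps i).
Proof.
move=> x y; rewrite !PsE => /addIr /(congr1 (fun p => L *: p)).
by rewrite !scalerA mulfV ?L_neq0 // !scale1r.
Qed.

Lemma PsK i (x : pt) : L *: (Ps i x - nu i) = x.
Proof. by rewrite PsE addrK scalerA mulfV ?L_neq0 // scale1r. Qed.

Lemma PsKV i (x : pt) : Ps i (L *: (x - nu i)) = x.
Proof. by rewrite PsE scalerA mulVf ?L_neq0 // scale1r subrK. Qed.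

Lemma fpE i : fp i = (L / (L - 1)) *: nu i.
Proof. by rewrite /fixpt scE. Qed.

Lemma fix_fp i x : Ps i x = x <-> x = fp i.
Proof.
rewrite PsE fpE; split.
  move=> h; have : (1 - L^-1) *: x = nu i.
    by rewrite scalerBl scale1r -{1}h addrAC subrr add0r.
  move/(congr1 (fun p => (L / (L - 1)) *: p)); rewrite scalerA.
  have -> : L / (L - 1) * (1 - L^-1) = 1.
    by field; rewrite L1_neq0 L_neq0.
  by rewrite scale1r.
move=> ->; rewrite scalerA -{2}[nu i]scale1r -scalerDl; congr (_ *: _).
by field; rewrite L1_neq0 L_neq0.
Qed.

Lemma fp_inj : injective fp.
Proof.
move=> i j; rewrite !fpE => /(congr1 (fun p => ((L - 1) / L) *: p)); rewrite !scalerA.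
have -> : (L - 1) / L * (L / (L - 1)) = 1 by field; rewrite L1_neq0 L_neq0.
by rewrite !scale1r => /Hnu.
Qed.

Lemma V0_fp x : V0 x -> exists2 i, i \in E & x = fp i.
Proof.
move=> hx; have [[i hi] _] := hx.
have e := (fix_fp i x).1 hi; exists i => //.
by rewrite inE; apply/asboolP; rewrite -e.
Qed.

Lemma E_V0 i : i \in E -> V0 (fp i).
Proof. by rewrite inE => /asboolP. Qed.

Lemma H3' : exists z1 z2 z3, [/\ V0 z1, V0 z2, V0 z3 & [/\ z1 != z2, z1 != z3 & z2 != z3]].
Proof.
have [x [y [z [hx hy hz [hxy hyz hxz]]]]] := H3.
by exists x, y, z; split => //; split; apply/eqP.
Qed.

Lemma E_gt0 : (0 < #|E|)%N.
Proof.
have [z1 [z2 [z3 [h1 _ _ _]]]] := H3'.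
have [i hi _] := V0_fp h1; by apply/card_gt0P; exists i.
Qed.

Definition b0 := barycenter L nu 0.

Lemma b0E : b0 = (#|E|%:R)^-1 *: \sum_(i in E) fp i.
Proof. by rewrite /b0 /barycenter expr0z !scE scale1r. Qed.

Definition affine (h : pt -> pt) := forall p q (s : R), h (s *: p + q) = s *: (h p - h 0) + h q.

Lemma affine_sum (h : pt -> pt) (I : finType) (P : pred I) (F : I -> pt) :
  affine h -> h (\sum_(i | P i) F i) = \sum_(i | P i) (h (F i) - h 0) + h 0.
Proof.
move=> ha; elim/big_rec2: _ => [|i y1 y2 Pi IH]; first by rewrite add0r.
by rewrite -[F i]scale1r ha !scale1r IH addrA.
Qed.

Lemma affine_avg (h : pt -> pt) (I : finType) (P : pred I) (F : I -> pt) :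
  affine h -> (0 < #|P|)%N ->
  h ((#|P|%:R)^-1 *: \sum_(i | P i) F i) = (#|P|%:R)^-1 *: \sum_(i | P i) h (F i).
Proof.
move=> ha hP; rewrite -[_ *: _]addr0 ha affine_sum // addrK.
rewrite sumrB scalerBr sumr_const.
have -> : (#|P|%:R^-1 : R) *: (h 0 *+ #|P|) = h 0.
  rewrite -scalerMnr scalerMnl -mulr_natr mulVf ?scale1r //.
  by rewrite pnatr_eq0 -lt0n.
by rewrite subrK.
Qed.

Lemma bary_fix (h : pt -> pt) : affine h -> (forall x y, V0 x -> V0 y -> h x = h y -> x = y) ->
  h @` V0 = V0 -> h b0 = b0.
Proof.
move=> ha hi hV; rewrite b0E affine_avg ?E_gt0 //; congr (_ *: _).
rewrite -!big_enum /= -[RHS](big_map fp xpredT id) -[LHS](big_map (h \o fp) xpredT id).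
apply: perm_big; apply: uniq_perm.
- rewrite map_inj_in_uniq ?enum_uniq // => i j; rewrite !mem_enum => hi' hj' /= e.
  by apply: fp_inj; apply: hi => //; apply: E_V0.
- by rewrite map_inj_uniq ?enum_uniq //; apply: fp_inj.
move=> p; apply/mapP/mapP => [[i hi' ->]|[i hi' ->]] /=.
  rewrite mem_enum in hi'.
  have : (h @` V0) (h (fp i)) by exists (fp i) => //; apply: E_V0.
  rewrite hV => /V0_fp [j hj ->]; by exists j; rewrite ?mem_enum.
rewrite mem_enum in hi'.
have : V0 (fp i) by apply: E_V0.
rewrite -hV => -[x hx <-]; have [j hj ->] := V0_fp hx.
by exists j; rewrite ?mem_enum.
Qed.


Lemma dist2C (p q : pt) : dist2 p q = dist2 q p.
Proof. by case: p q => [p1 p2] [q1 q2]; rewrite /dist2 /dotp /=; ring. Qed.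

Lemma refm_lin P Q s (p q : pt) : refm P Q (s *: p + q) = s *: refm P Q p + refm P Q q.
Proof. by case: p q => [p1 p2] [q1 q2]; rewrite -?scE /sc /refm /=; apply/pair_equal_spec; split => /=; ring. Qed.

Lemma rot_lin a b s (p q : pt) : Defs.rot a b (s *: p + q) = s *: Defs.rot a b p + Defs.rot a b q.
Proof. by case: p q => [p1 p2] [q1 q2]; rewrite -?scE /sc /Defs.rot /=; apply/pair_equal_spec; split => /=; ring. Qed.

Lemma rot_sub a b (p q : pt) : Defs.rot a b (p - q) = Defs.rot a b p - Defs.rot a b q.
Proof. by case: p q => [p1 p2] [q1 q2]; rewrite -?scE /sc /Defs.rot /=; apply/pair_equal_spec; split => /=; ring. Qed.

Lemma rot_scale a b s (p : pt) : Defs.rot a b (s *: p) = s *: Defs.rot a b p.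
Proof. by case: p => [p1 p2]; rewrite -?scE /sc /Defs.rot /=; apply/pair_equal_spec; split => /=; ring. Qed.

Lemma refm_sub P Q (p q : pt) : refm P Q (p - q) = refm P Q p - refm P Q q.
Proof. by case: p q => [p1 p2] [q1 q2]; rewrite -?scE /sc /refm /=; apply/pair_equal_spec; split => /=; ring. Qed.

Lemma refm_scale P Q s (p : pt) : refm P Q (s *: p) = s *: refm P Q p.
Proof. by case: p => [p1 p2]; rewrite -?scE /sc /refm /=; apply/pair_equal_spec; split => /=; ring. Qed.

Lemma affine_S x y : x != y -> affine (S x y).
Proof.
move=> hxy p q s; rewrite -[LHS](subrK (S x y q)) (@S_diff _ x y (s *: p + q) q hxy) addrK; congr (_ + _).
by rewrite S_diff // subr0 refm_scale.
Qed.

Lemma affine_comp (h g : pt -> pt) : affine h -> affine g -> affine (h \o g).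
Proof.
move=> ah ag p q s /=; rewrite ag.
have e : h (g p - g 0) - h 0 = h (g p) - h (g 0).
  by have := ah (g p - g 0) (g 0) 1; rewrite !scale1r subrK => ->; rewrite addrK.
by rewrite ah -e.
Qed.

Lemma affine_Ps i : affine (Ps i).
Proof. by move=> p q s; rewrite !PsE scalerDr scaler0 add0r addrK addrA scalerA mulrC -scalerA. Qed.

Lemma affine_tr (c : pt) : affine (fun p => p + c).
Proof. by move=> p q s /=; rewrite add0r addrK addrA. Qed.

Lemma affine_scale (c : R) : affine (fun p => c *: p).
Proof. by move=> p q s /=; rewrite scaler0 subr0 scalerDr !scalerA mulrC. Qed.

Lemma affine_rot a b (c : pt) : affine (fun p => c + Defs.rot a b (p - c)).
Proof.
move=> [p1 p2] [q1 q2] s; case: c => c1 c2.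
by rewrite -?scE /sc /Defs.rot /=; apply/pair_equal_spec; split => /=; ring.
Qed.

Definition cellback (h : pt -> pt) (i j : 'I_N) := fun p => L *: (h (Ps i p) - nu j).

Lemma affine_cellback h i j : affine h -> affine (cellback h i j).
Proof.
move=> ah; have -> : cellback h i j = (fun p => L *: p) \o (fun p => p + - nu j) \o h \o Ps i by [].
have h1 := affine_comp ah (affine_Ps i).
have h2 := affine_comp (affine_tr (- nu j)) h1.
exact: (affine_comp (affine_scale L) h2).
Qed.

Lemma cellbackE h i j p : Ps j (cellback h i j p) = h (Ps i p).
Proof. by rewrite /cellback PsKV. Qed.

Lemma cellback_img (h : pt -> pt) i j : h @` (Ps i @` V0) = Ps j @` V0 ->
  cellback h i j @` V0 = V0.
Proof.
move=> e; apply/seteqP; split => [_ [x hx <-]|x hx].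
  have : (h @` (Ps i @` V0)) (h (Ps i x)) by exists (Ps i x) => //; exists x.
  by rewrite e => -[y hy ey]; rewrite /cellback -ey PsK.
have : (Ps j @` V0) (Ps j x) by exists x.
rewrite -e => -[_ [y hy <-] ey]; exists y => //.
by rewrite /cellback ey PsK.
Qed.

Lemma S_inj x y : x != y -> injective (S x y).
Proof. by move=> h p q e; rewrite -(S_invol p h) e S_invol. Qed.

Lemma cell_b0 (h : pt -> pt) i j : affine h -> injective h ->
  h @` (Ps i @` V0) = Ps j @` V0 -> h (Ps i b0) = Ps j b0.
Proof.
move=> ah hi e; have := bary_fix (affine_cellback i j ah) _ (cellback_img e).
move=> /(_ _) hb; rewrite -(cellbackE h i j b0) hb //.
by move=> p q _ _; rewrite /cellback => /(scalerI L_neq0) /addIr /hi /Ps_inj.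
Qed.

Lemma affine_id : affine id.
Proof. by move=> p q s /=; rewrite subr0. Qed.

Lemma cell_inj i i' : Ps i @` V0 = Ps i' @` V0 -> i = i'.
Proof.
move=> e; have e' : id @` (Ps i @` V0) = Ps i' @` V0 by rewrite image_id.
have := cell_b0 affine_id (@inj_id _) e'.
by rewrite !PsE => /addrI /Hnu.
Qed.

Lemma S_img2 x y (A : set pt) : x != y -> S x y @` (S x y @` A) = A.
Proof.
move=> h; rewrite image_comp.
have -> : S x y \o S x y = id by apply: boolp.funext => p /=; rewrite S_invol.
by rewrite image_id.
Qed.

Definition Bc := (#|'I_N|%:R)^-1 *: \sum_(i : 'I_N) Ps i b0.

Lemma S_B x y : V0 x -> V0 y -> x != y -> S x y Bc = Bc.
Proof.
move=> hx hy hxy.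
have [sg Hsg] := boolp.choice (Hsym hx hy (elimN eqP hxy)).
have sg_inj : injective sg.
  move=> i i' e; apply: cell_inj.
  have := Hsg i; rewrite e -(Hsg i') => /(congr1 (fun A => S x y @` A)).
  by rewrite !S_img2.
rewrite /Bc.
have hN : (0 < #|'I_N|)%N.
  have [z1 [z2 [z3 [h1 _ _ _]]]] := H3'; have [i _ _] := V0_fp h1.
  by apply/card_gt0P; exists i.
have := affine_avg (fun i : 'I_N => Ps i b0) (affine_S hxy) (P := predT).
move=> ->; last exact: hN.
congr (_ *: _).
under eq_bigr => i _ do rewrite (cell_b0 (affine_S hxy) (S_inj hxy) (Hsg i)).
by rewrite [RHS](reindex_inj sg_inj).
Qed.

Lemma center_uniq P Q r r' : (forall x, V0 x -> dist2 x P = r) ->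
  (forall x, V0 x -> dist2 x Q = r') -> P = Q.
Proof.
move=> hP hQ; have [z1 [z2 [z3 [h1 h2 h3 [n12 n13 n23]]]]] := H3'.
have key : forall z, V0 z -> dotp (z - z1) (P - Q) = 0.
  move=> z hz.
  have -> : dotp (z - z1) (P - Q) = 2^-1 * ((dist2 z1 P - dist2 z1 Q) - (dist2 z P - dist2 z Q)).
    by case: z z1 P Q {hz h1 n12 n13 hP hQ} => [a1 a2] [b1 b2] [c1 c2] [d1 d2]; rewrite /dist2 /dotp /=; field.
  by rewrite (hP _ hz) (hQ _ hz) (hP _ h1) (hQ _ h1) subrr mulr0.
apply/eqP; rewrite -subr_eq0; apply/eqP.
by apply: (circ3 n12 n13 n23 (hP _ h1) (hP _ h2) (hP _ h3)); apply: key.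
Qed.

Lemma concyclic_B : exists r, forall x, V0 x -> dist2 x Bc = r.
Proof.
have [z1 [z2 [z3 [h1 _ _ _]]]] := H3'.
exists (dist2 z1 Bc) => x hx.
case: (eqVneq x z1) => [-> //|n].
by rewrite dist2C (S_fixE n (S_B hx h1 n)) dist2C.
Qed.


Lemma VMM0 : VMM L nu 0 = V0.
Proof.
apply/seteqP; split => [_ [x hx <-]|x hx]; first by rewrite expr0z scE scale1r.
by exists x => //; rewrite expr0z scE scale1r.
Qed.

Definition grot a b : pt -> pt := fun p => b0 + Defs.rot a b (p - b0).

Lemma RotM0E f : RotM L nu 0 f <->
  exists a b, [/\ a ^+ 2 + b ^+ 2 = 1, f = grot a b & f @` V0 = V0].
Proof. by rewrite /RotM VMM0. Qed.

Lemma grot_sub a b (p q : pt) : grot a b p - grot a b q = Defs.rot a b (p - q).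
Proof. by rewrite /grot /= opprD addrACA subrr add0r -rot_sub opprB addrA subrK. Qed.

Lemma addsubK (c x : pt) : c + x - c = x.
Proof. by rewrite addrAC subrr add0r. Qed.

Lemma grot_fix a b (p : pt) : grot a b p = p -> Defs.rot a b (p - b0) = p - b0.
Proof. by move=> h; rewrite -{2}h /grot /= addrAC subrr add0r. Qed.

Lemma norm_dist2 (f : pt -> pt) : (forall p q, dotp (f p - f q) (f p - f q) = dotp (p - q) (p - q)) ->
  forall p q, dist2 (f p) (f q) = dist2 p q.
Proof. by move=> h p q; rewrite /dist2 h. Qed.

Lemma grot_iso a b : a ^+ 2 + b ^+ 2 = 1 -> forall p q, dist2 (grot a b p) (grot a b q) = dist2 p q.
Proof. by move=> h; apply: norm_dist2 => p q; rewrite grot_sub rot_norm h mul1r. Qed.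

Lemma Ps_sub i (p q : pt) : Ps i p - Ps i q = L^-1 *: (p - q).
Proof. by rewrite !PsE opprD addrACA subrr addr0 scalerBr. Qed.

Lemma dist2_eq0 (p q : pt) : dist2 p q = 0 -> p = q.
Proof.
case: p q => [p1 p2] [q1 q2]; rewrite /dist2 /dotp /= => h.
have [h1 h2] : p1 - q1 = 0 /\ p2 - q2 = 0 by apply: sq_eq0; rewrite !expr2.
by move/eqP: h1; rewrite subr_eq0 => /eqP ->; move/eqP: h2; rewrite subr_eq0 => /eqP ->.
Qed.

Lemma refm_fixed_normal P Q : exists n : pt, n != 0 /\ forall w, refm P Q w = w -> dotp w n = 0.
Proof.
case: (boolP ((P == 1) && (Q == 0))) => [/andP[/eqP -> /eqP ->]|h].
  exists (0, 1); split; first by apply/negP => /eqP /pair_equal_spec [_ /eqP]; rewrite oner_eq0.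
  case=> w1 w2 /pair_equal_spec [/= _ e2]; rewrite /dotp /=.
  have : 2 * w2 = 0 by lra.
  by move/eqP; rewrite mulf_eq0 pnatr_eq0 /= => /eqP ->; ring.
exists (P - 1, Q); split.
  apply/negP => /eqP /pair_equal_spec [h1 h2]; move: h; rewrite h2 eqxx andbT.
  by move/eqP: h1; rewrite subr_eq0 => ->.
case=> w1 w2 /pair_equal_spec [/= e1 _]; rewrite /dotp /=.
by nra.
Qed.

Section Concyc.
Variable r : R.
Hypothesis hc : forall x, V0 x -> dist2 x b0 = r.

Lemma S_b0 x y : V0 x -> V0 y -> x != y -> S x y b0 = b0.
Proof. by move=> hx hy h; apply: S_fix => //; rewrite dist2C hc // dist2C hc. Qed.

Lemma S_V0 x y : V0 x -> V0 y -> x != y -> forall z, V0 z -> V0 (S x y z).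
Proof.
move=> hx hy hxy.
have [z1 [z2 [z3 [h1 h2 h3 [n12 n13 n23]]]]] := H3'.
have [i0 _ _] := V0_fp h1.
have [j hj] := Hsym hx hy (elimN eqP hxy) i0.
set zp := cellback (S x y) i0 j.
have zpV : forall z, V0 z -> V0 (zp z).
  by move=> z hz; rewrite -(cellback_img hj); exists z.
have Sb := S_b0 hx hy hxy.
set e := S x y z1 - zp z1.
have he : forall z, S x y z - zp z = e.
  move=> z.
  have D : zp z - zp z1 = S x y z - S x y z1.
    rewrite /zp /cellback -scalerBr opprD addrACA subrr addr0.
    rewrite (@S_diff _ x y (Ps i0 z) (Ps i0 z1) hxy) Ps_sub refm_scale scalerA mulfV ?L_neq0 // scale1r.
    by rewrite (@S_diff _ x y z z1 hxy).
  rewrite -(subrK (zp z1) (zp z)) D /e.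
  move: (S x y z) (S x y z1) (zp z1) => [a1 a2] [c1 c2] [d1 d2].
  by apply/pair_equal_spec; split => /=; ring.
have Sw : forall z, V0 z -> dist2 (S x y z) b0 = r.
  by move=> z hz; rewrite -{1}Sb S_iso // hc.
have Swe : forall z, V0 z -> dist2 (S x y z - e) b0 = r.
  by move=> z hz; rewrite -(he z) opprB addrC subrK hc //; apply: zpV.
have key : forall z, V0 z -> dotp (S x y z - S x y z1) e = 0.
  move=> z hz.
  have -> : dotp (S x y z - S x y z1) e = 2^-1 * ((dist2 (S x y z) b0 - dist2 (S x y z - e) b0) - (dist2 (S x y z1) b0 - dist2 (S x y z1 - e) b0)).
    by move: (S x y z) (S x y z1) (e) (b0) => [a1 a2] [c1 c2] [e1 e2] [d1 d2]; rewrite /dist2 /dotp /=; field.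
  by rewrite Sw // Swe // Sw // Swe // !subrr mulr0.
have e0 : e = 0.
  have i12 : S x y z1 != S x y z2 by apply: contra n12 => /eqP /(S_inj hxy) ->.
  have i13 : S x y z1 != S x y z3 by apply: contra n13 => /eqP /(S_inj hxy) ->.
  have i23 : S x y z2 != S x y z3 by apply: contra n23 => /eqP /(S_inj hxy) ->.
  by apply: (circ3 i12 i13 i23 (Sw _ h1) (Sw _ h2) (Sw _ h3)); apply: key.
move=> z hz; have := he z; rewrite e0 => /eqP; rewrite subr_eq0 => /eqP ->.
exact: zpV.
Qed.

End Concyc.

Lemma CI1 f : RotM L nu 0 f -> forall i, exists j f', RotM L nu 0 f' /\ forall p, f (Ps i p) = Ps j (f' p).
Proof.
move=> /RotM0E [a [b [hab -> himg]]] i.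
case: (boolP ((a == 1) && (b == 0))) => [/andP[/eqP ha /eqP hb]|hne].
  have gid : grot a b = id.
    apply: boolp.funext => p; rewrite /grot ha hb.
    have -> : forall w : pt, Defs.rot 1 0 w = w.
      by case=> w1 w2; rewrite /Defs.rot /=; apply/pair_equal_spec; split => /=; ring.
    by rewrite addrC subrK.
  exists i, (grot a b); split; first by apply/RotM0E; exists a, b; split.
  by move=> p; rewrite gid.
have gV : forall x, V0 x -> V0 (grot a b x).
  by move=> x hx; rewrite -himg; exists x.
have gS : forall x, V0 x -> exists2 x', V0 x' & grot a b x' = x.
  by move=> x; rewrite -{1}himg => -[x' hx' <-]; exists x'.
have giso := grot_iso hab.
have [rB hB] := concyclic_B.
have gB : grot a b Bc = Bc.
  apply: (@center_uniq _ _ rB rB) => // x /gS [x' hx' <-].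
  by rewrite giso hB.
have Bb0 : Bc = b0.
  move: (grot_fix gB) => /(rot_fix hab); rewrite negb_and in hne => /(_ hne) /eqP.
  by rewrite subr_eq0 => /eqP.
have hc : forall x, V0 x -> dist2 x b0 = rB by move=> x hx; rewrite -Bb0 hB.
have [z1 [z2 [z3 [h1 h2 h3 [n12 n13 n23]]]]] := H3'.
have hz1 : z1 != b0.
  apply/negP => /eqP e1.
  have e0 : rB = 0 by rewrite -(hc _ h1) e1 /dist2 subrr /dotp /= mulr0 addr0.
  have := hc _ h2; rewrite e0 => /dist2_eq0 e2.
  by move: n12; rewrite e1 e2 eqxx.
set y := grot a b z1.
have hy : V0 y by apply: gV.
have ny : z1 != y.
  apply/negP => /eqP ey.
  move: (grot_fix (esym ey)) => /(rot_fix hab); rewrite negb_and in hne => /(_ hne) /eqP.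
  by rewrite subr_eq0 (negbTE hz1).
set S1 := S z1 y.
have S1b : S1 b0 = b0 by apply: (S_b0 hc h1 hy ny).
have S1E : forall p, S1 p = b0 + refm (sP z1 y) (sQ z1 y) (p - b0).
  by move=> p; rewrite -(@S_diff _ z1 y p b0 ny) -/S1 S1b addrC subrK.
set P' := a * sP z1 y - b * sQ z1 y.
set Q' := a * sQ z1 y + b * sP z1 y.
have S2E : forall p, grot a b (S1 p) = b0 + refm P' Q' (p - b0).
  by move=> p; rewrite /grot /= S1E addsubK rot_refm.
have S2V : forall p, V0 p -> V0 (grot a b (S1 p)).
  by move=> p hp; apply: gV; apply: (S_V0 hc h1 hy ny).
have [u [hu nu']] : exists u, V0 u /\ grot a b (S1 u) != u.
  have [n [n0 hn]] := refm_fixed_normal P' Q'.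
  apply: boolp.contrapT => hno.
  have fixk : forall z, V0 z -> dotp (z - b0) n = 0.
    move=> z hz; apply: hn.
    have fz : grot a b (S1 z) = z.
      by apply: boolp.contrapT => hz'; apply: hno; exists z; split => //; apply/eqP.
    by rewrite -{2}fz S2E addsubK.
  move: n0; have : n = 0.
    apply: (circ3 n12 n13 n23 (hc _ h1) (hc _ h2) (hc _ h3)).
      have := fixk _ h2; have := fixk _ h1; move: (z1) (z2) (b0) (n) => [x1 x2] [y1 y2] [c1 c2] [m1 m2].
      by rewrite /dotp /= => e1 e2; lra.
    have := fixk _ h3; have := fixk _ h1; move: (z1) (z3) (b0) (n) => [x1 x2] [y1 y2] [c1 c2] [m1 m2].
    by rewrite /dotp /= => e1 e2; lra.
  by move=> ->; rewrite eqxx.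
set v := grot a b (S1 u).
have hv : V0 v by apply: S2V.
have nuv : u != v by rewrite eq_sym.
have S3b : S u v b0 = b0 by apply: (S_b0 hc hu hv nuv).
have hub : u - b0 != 0.
  rewrite subr_eq0; apply/negP => /eqP eub.
  have e0 : rB = 0 by rewrite -(hc _ hu) eub /dist2 subrr /dotp /= mulr0 addr0.
  by have := hc _ h1; rewrite e0 => /dist2_eq0 e1; rewrite e1 eqxx in hz1.
have [eP eQ] : P' = sP u v /\ Q' = sQ u v.
  apply: (refm_inj hub); rewrite -(@S_diff _ u v u b0 nuv) S3b S_x //.
  by rewrite /v S2E addsubK.
have hS2 : forall p, grot a b (S1 p) = S u v p.
  by move=> p; rewrite S2E eP eQ -(@S_diff _ u v p b0 nuv) S3b addrC subrK.
have hg : grot a b = S u v \o S1.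
  by apply: boolp.funext => p /=; rewrite -hS2 /S1 S_invol.
have [k hk] := Hsym h1 hy (elimN eqP ny) i.
have [j hj] := Hsym hu hv (elimN eqP nuv) k.
have himgc : grot a b @` (Ps i @` V0) = Ps j @` V0 by rewrite hg -image_comp hk hj.
set cb := cellback (grot a b) i j.
have cbV := cellback_img himgc.
have cbsub : forall p q, cb p - cb q = Defs.rot a b (p - q).
  move=> p q; rewrite /cb /cellback -scalerBr opprD addrACA subrr addr0 grot_sub Ps_sub.
  by rewrite rot_scale scalerA mulfV ?L_neq0 // scale1r.
have cbiso : forall p q, dist2 (cb p) (cb q) = dist2 p q.
  by apply: norm_dist2 => p q; rewrite cbsub rot_norm hab mul1r.
have cbb : cb b0 = b0.
  apply: (@center_uniq _ _ rB rB) => // x; rewrite -{1}cbV => -[x' hx' <-].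
  by rewrite cbiso hc.
exists j, cb; split.
  apply/RotM0E; exists a, b; split => //.
  apply: boolp.funext => p; rewrite /grot /= -cbsub cbb addrCA subrr addr0 //.
by move=> p; rewrite cellbackE.
Qed.


Lemma grot_comp a1 b1 a2 b2 :
  grot a2 b2 \o grot a1 b1 = grot (a2 * a1 - b2 * b1) (a2 * b1 + b2 * a1).
Proof.
apply: boolp.funext => p /=; rewrite /grot addsubK; congr (_ + _).
by move: (p - b0) => [w1 w2]; rewrite /Defs.rot /=; apply/pair_equal_spec; split => /=; ring.
Qed.

Lemma RotM0_comp f1 f2 : RotM L nu 0 f1 -> RotM L nu 0 f2 -> RotM L nu 0 (f2 \o f1).
Proof.
move=> /RotM0E [a1 [b1 [h1 -> i1]]] /RotM0E [a2 [b2 [h2 -> i2]]].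
apply/RotM0E; exists (a2 * a1 - b2 * b1), (a2 * b1 + b2 * a1); split.
- have -> : (a2 * a1 - b2 * b1) ^+ 2 + (a2 * b1 + b2 * a1) ^+ 2 = (a1 ^+ 2 + b1 ^+ 2) * (a2 ^+ 2 + b2 ^+ 2) by ring.
  by rewrite h1 h2 mulr1.
- by rewrite grot_comp.
- by rewrite -image_comp i1 i2.
Qed.

Lemma RotM0_id : RotM L nu 0 id.
Proof.
apply/RotM0E; exists 1, 0; split; first by rewrite expr1n expr0n addr0.
  apply: boolp.funext => p; rewrite /grot.
  have -> : forall w : pt, Defs.rot 1 0 w = w.
    by case=> w1 w2; rewrite /Defs.rot /=; apply/pair_equal_spec; split => /=; ring.
  by rewrite addrCA subrr addr0.
by rewrite image_id.
Qed.

Lemma RotM0_V0 f x : RotM L nu 0 f -> V0 x -> V0 (f x).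
Proof. by move=> /RotM0E [a [b [_ _ e]]] hx; rewrite -e; exists x. Qed.

Fixpoint psw (w : nat -> 'I_N) (n : nat) (z : pt) : pt :=
  if n is n'.+1 then Ps (w n') (psw w n' z) else z.

Lemma psw_ext w w' n z : (forall k, (k < n)%N -> w k = w' k) -> psw w n z = psw w' n z.
Proof.
elim: n => [//|n IH] h /=.
have -> : psw w n z = psw w' n z by apply: IH => k hk; apply: h; apply: ltnW.
by rewrite h.
Qed.

Lemma CIn f : RotM L nu 0 f -> forall n w, exists w' f', RotM L nu 0 f' /\
  forall z, f (psw w n z) = psw w' n (f' z).
Proof.
move=> hf n; elim: n f hf => [|n IH] f hf w.
  by exists w, f; split.
have [j [f1 [hf1 e1]]] := CI1 hf (w n).
have [w'' [f' [hf' e']]] := IH f1 hf1 w.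
exists (fun k => if k == n then j else w'' k), f'; split => // z /=.
rewrite eqxx e1 e'; congr (Ps j _); apply: psw_ext => k hk.
by rewrite (ltn_eqF hk).
Qed.

Hypothesis HKe : K = [set x | exists i, (Ps i @` K) x].
Hypothesis Hnest : forall i j, i != j -> Ps i @` K `&` Ps j @` K = Ps i @` V0 `&` Ps j @` V0.

Section Fold.
Variable g : 'I_N -> pt -> pt.
Hypothesis hg : forall i, RotM L nu 0 (g i).
Hypothesis hcons : forall i j x y, V0 x -> V0 y -> Ps i x = Ps j y -> g i x = g j y.
Variable i0 : 'I_N.
Hypothesis hnu0 : nu i0 = 0.
Hypothesis hg0 : forall p, g i0 p = p.

Lemma PsK_sub i x : K x -> K (Ps i x).
Proof. by move=> hx; rewrite HKe; exists i; exists x. Qed.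

Lemma V0_K x : V0 x -> K x.
Proof.
move=> hx; have [hfx [y [i [j [hfy nyx nij e]]]]] := hx.
have hij : i != j by apply/negP => /eqP eij; apply: nij; rewrite eij.
have hyV : V0 y.
  split => //; exists x, j, i; split => //.
  - by move=> e'; apply: nyx.
  - by move=> e'; apply: nij.
have : (Ps i @` V0 `&` Ps j @` V0) (Ps i x) by split; [exists x | exists y].
rewrite -(Hnest hij) => -[[k hk ek] _].
by rewrite -(Ps_inj ek).
Qed.

Lemma psw_K w n z : V0 z -> K (psw w n z).
Proof. by move=> hz; elim: n => [|n IH] /=; [apply: V0_K | apply: PsK_sub]. Qed.

Definition Fold (p : pt) : pt :=
  match pselect (exists iq : 'I_N * pt, K iq.2 /\ p = Ps iq.1 iq.2) with
  | left H => g (projT1 (cid H)).1 (projT1 (cid H)).2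
  | right _ => p
  end.

Lemma FoldE i q : K q -> Fold (Ps i q) = g i q.
Proof.
move=> hq; rewrite /Fold; case: pselect => [H|nH]; last by exfalso; apply: nH; exists (i, q).
case: (cid H) => -[j q'] /= [hq' e].
case: (eqVneq i j) => [eij|nij].
  by rewrite -eij in e *; rewrite (Ps_inj e).
have : (Ps i @` K `&` Ps j @` K) (Ps i q) by split; [exists q | exists q'].
rewrite (Hnest nij) => -[[x hx ex] [y hy ey]].
have eq1 := Ps_inj ex; have eq2 : y = q' by apply: (@Ps_inj j); rewrite ey e.
rewrite -eq1 -eq2; symmetry; apply: hcons => //.
by rewrite ex ey.
Qed.

Lemma Fold_main n w : exists f, RotM L nu 0 f /\ forall z, V0 z -> iter n Fold (psw w n z) = f z.
Proof.
elim: n w => [|n IH] w; first by exists id; split => //; apply: RotM0_id.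
have [w' [f' [hf' e']]] := CIn (hg (w n)) n w.
have [f'' [hf'' e'']] := IH w'.
exists (f'' \o f'); split; first by apply: RotM0_comp.
move=> z hz; rewrite iterSr /= FoldE; last by apply: psw_K.
by rewrite e' e'' //; apply: RotM0_V0.
Qed.

Definition Qlev m (u : pt) := exists w z, V0 z /\ u = psw w m z.

Lemma lev_step m u : Qlev m u -> Qlev m.+1 (L^-1 *: u) /\ iter m.+1 Fold (L^-1 *: u) = iter m Fold u.
Proof.
move=> [w [z [hz ->]]].
have e : L^-1 *: psw w m z = Ps i0 (psw w m z) by rewrite PsE hnu0 addr0.
split.
  exists (fun k => if k == m then i0 else w k), z; split => //=.
  rewrite eqxx e; congr (Ps i0 _); apply: psw_ext => k hk.
  by rewrite (ltn_eqF hk).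
by rewrite iterSr /= e FoldE ?hg0 //; apply: psw_K.
Qed.

Lemma lev_stepn m k u : Qlev m u ->
  iter (m + k) Fold ((L^-1) ^+ k *: u) = iter m Fold u.
Proof.
move=> hu; elim: k => [|k IH]; first by rewrite addn0 expr0 scale1r.
have hq : Qlev (m + k) ((L^-1) ^+ k *: u).
  elim: k {IH} => [|k IHk]; first by rewrite addn0 expr0 scale1r.
  by rewrite exprS -scalerA addnS; case: (lev_step IHk).
by rewrite exprS -scalerA addnS; case: (lev_step hq) => _ ->.
Qed.

End Fold.


Lemma LzD (m n : int) : L ^ (m + n) = L ^ m * L ^ n.
Proof. by rewrite expfzDr ?L_neq0. Qed.

Lemma Lz_neq0 (m : int) : L ^ m != 0.
Proof. by rewrite expfz_neq0 ?L_neq0. Qed.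

Lemma VMM_E M x : VMM L nu M x <-> exists2 z, V0 z & x = L ^ M *: z.
Proof. by split => [[z hz <-]|[z hz ->]]; [exists z; rewrite ?scE | exists z; rewrite ?scE]. Qed.

Lemma Vcx_E M t v : Vcx L nu M t v <-> exists2 z, V0 z & v = L ^ M *: z + t.
Proof. by split => [[z hz <-]|[z hz ->]]; [exists z; rewrite ?scE | exists z; rewrite ?scE]. Qed.

Lemma bary_E M : barycenter L nu M = L ^ M *: b0.
Proof. by rewrite /b0 /barycenter !scE expr0z scale1r. Qed.

Definition zconj (m : int) (f : pt -> pt) := fun p => L ^ m *: f ((L ^ m)^-1 *: p).

Lemma RotM_scale M m f : RotM L nu M f -> RotM L nu (M + m) (zconj m f).
Proof.
move=> [a [b [hab ef himg]]].
have c0 := Lz_neq0 m.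
exists a, b; split => //.
  apply: boolp.funext => p; rewrite /zconj ef !bary_E LzD mulrC -scalerA.
  by rewrite scalerDr -rot_scale scalerBr [L ^ m *: ((L ^ m)^-1 *: p)]scalerA mulfV // scale1r.
apply/seteqP; split => [_ [x /VMM_E [z hz ->] <-]|y /VMM_E [z hz ->]].
  rewrite /zconj LzD mulrC -scalerA scalerA mulVf // scale1r.
  have : (f @` VMM L nu M) (f (L ^ M *: z)) by exists (L ^ M *: z) => //; apply/VMM_E; exists z.
  rewrite himg => /VMM_E [z' hz' ->]; apply/VMM_E; exists z' => //.
  by rewrite scalerA -LzD addrC.
have : VMM L nu M (L ^ M *: z) by apply/VMM_E; exists z.
rewrite -himg => -[x /VMM_E [z' hz' ->] ex].
exists (L ^ (M + m) *: z'); first by apply/VMM_E; exists z'.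
by rewrite /zconj LzD mulrC -scalerA scalerA mulVf // scale1r ex scalerA.
Qed.

Lemma psw_closed w n z : L ^+ n *: psw w n z = z + \sum_(j < n) L ^+ j.+1 *: nu (w j).
Proof.
elim: n => [|n IH] /=; first by rewrite expr0 scale1r big_ord0 addr0.
rewrite big_ord_recr /= addrA -IH PsE scalerDr; congr (_ + _).
by rewrite scalerA exprSr -mulrA mulfV ?L_neq0 // mulr1.
Qed.


Lemma bij_onto_ext (A : finType) (V : set pt) (l l' : pt -> A) :
  (forall v, V v -> l v = l' v) -> bij_onto V l -> bij_onto V l'.
Proof.
move=> e [hi hs]; split.
  by move=> v w hv hw; rewrite -!e //; apply: hi.
by move=> a; have [v [hv <-]] := hs a; exists v; rewrite e.
Qed.

Lemma scz_inv (m : int) (p : pt) : (L ^ m)^-1 *: (L ^ m *: p) = p.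
Proof. by rewrite scalerA mulVf ?Lz_neq0 // scale1r. Qed.

Lemma scz_invV (m : int) (p : pt) : L ^ m *: ((L ^ m)^-1 *: p) = p.
Proof. by rewrite scalerA mulfV ?Lz_neq0 // scale1r. Qed.

Lemma Lz_eq (m n : int) : m = n -> L ^ m = L ^ n.
Proof. by move=> ->. Qed.

Section Main.
Variable A : finType.
Hypothesis H0 : forall i : 'I_N, val i = 0%N -> nu i = 0.
Hypothesis HN : (2 <= N)%N.

Definition i0 : 'I_N := Ordinal (leq_trans (isT : (1 <= 2)%N) HN).

Lemma nu_i0 : nu i0 = 0.
Proof. exact: H0. Qed.

Lemma dir_fwd M (l0 : pt -> A) (Hl0 : bij_onto (VMM L nu M) l0) :
  good_labelling_property L nu A ->
  exists lt : pt -> A,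
    (forall v, VMM L nu M v -> lt v = l0 v) /\
    forall i : 'I_N, exists f, RotM L nu M f /\
      forall v, Vcx L nu M (sc (L ^ (M + 1)) (nu i)) v ->
        lt (f (v - sc (L ^ (M + 1)) (nu i))) = lt v.
Proof.
move=> [M' [l [[hli hls] hcx]]].
set c := L ^ (M - M').
have c0 : c != 0 by apply: Lz_neq0.
have cM : L ^ M = c * L ^ M' by rewrite /c -LzD; apply: Lz_eq; rewrite subrK.
have [xa hxa] := boolp.choice hls.
pose sg (a : A) := l0 (c *: xa a).
exists (fun v => sg (l (c^-1 *: v))); split.
  move=> v /VMM_E [z hz ->].
  have e1 : c^-1 *: (L ^ M *: z) = L ^ M' *: z by rewrite cM -scalerA scalerA mulVf // scale1r.
  rewrite e1 /sg; have [hx1 hx2] := hxa (l (L ^ M' *: z)).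
  rewrite (hli _ _ hx1 _ hx2) ?cM ?scalerA //; apply/VMM_E; exists z => //.
move=> i.
set t' := sc (L ^ (M' + 1)) (nu i).
have ht' : complex_shift L nu M' t'.
  exists 0%N, (fun _ => i); rewrite big_ord1 /= addr0 //.
have [f' [hf' ef']] := hcx t' ht'.
exists (zconj (M - M') f'); split.
  have := RotM_scale (M - M') hf'.
  by rewrite addrCA subrr addr0.
move=> v /Vcx_E [z hz ->].
have et : sc (L ^ (M + 1)) (nu i) = c *: t'.
  rewrite /t' !scE scalerA -LzD; congr (_ *: _); apply: Lz_eq.
  by rewrite addrA subrK.
have e1 : c^-1 *: (L ^ M *: z + sc (L ^ (M + 1)) (nu i)) = L ^ M' *: z + t'.
  by rewrite scalerDr et cM -scalerA !scz_inv.
rewrite addrK /zconj -/c scz_inv.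
have hv' : Vcx L nu M' t' (L ^ M' *: z + t') by apply/Vcx_E; exists z.
rewrite e1 (ef' _ hv') addrK.
by rewrite cM -scalerA scz_inv.
Qed.


Lemma rot10 (w : pt) : Defs.rot 1 0 w = w.
Proof. by case: w => w1 w2; rewrite /Defs.rot /=; apply/pair_equal_spec; split => /=; ring. Qed.

Lemma dir_back M (l0 : pt -> A) (Hl0 : bij_onto (VMM L nu M) l0)
  (lt : pt -> A) (hlt : forall v, VMM L nu M v -> lt v = l0 v)
  (gM : 'I_N -> pt -> pt) (hgM : forall i, RotM L nu M (gM i))
  (hgl : forall i v, Vcx L nu M (sc (L ^ (M + 1)) (nu i)) v ->
     lt (gM i (v - sc (L ^ (M + 1)) (nu i))) = lt v) :
  good_labelling_property L nu A.
Proof.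
have [hli hls] := Hl0.
pose gh i := zconj (- M) (gM i).
have hgh : forall i, RotM L nu 0 (gh i).
  by move=> i; have := RotM_scale (- M) (hgM i); rewrite subrr.
have ghE : forall i x, gh i x = (L ^ M)^-1 *: gM i (L ^ M *: x).
  by move=> i x; rewrite /gh /zconj invr_expz opprK -invr_expz.
have gMV : forall i p, VMM L nu M p -> VMM L nu M (gM i p).
  by move=> i p hp; have [a [b [_ _ <-]]] := hgM i; exists p.
have tE : forall i, sc (L ^ (M + 1)) (nu i) = L ^ M *: (L *: nu i).
  by move=> i; rewrite scE LzD expr1z scalerA.
have VxM : forall x, V0 x -> VMM L nu M (L ^ M *: x) by move=> x hx; apply/VMM_E; exists x.
have hcons : forall i j x y, V0 x -> V0 y -> Ps i x = Ps j y -> gh i x = gh j y.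
  move=> i j x y hx hy e.
  have ev : L ^ M *: x + sc (L ^ (M + 1)) (nu i) = L ^ M *: y + sc (L ^ (M + 1)) (nu j).
    rewrite !tE -!scalerDr; congr (_ *: _).
    move: e; rewrite !PsE => /(congr1 (fun p => L *: p)).
    by rewrite !scalerDr !scalerA mulfV ?L_neq0 // !scale1r.
  have h1 := hgl i (L ^ M *: x + sc (L ^ (M + 1)) (nu i)).
  have h2 := hgl j (L ^ M *: y + sc (L ^ (M + 1)) (nu j)).
  rewrite addrK in h1; rewrite addrK in h2.
  have : lt (gM i (L ^ M *: x)) = lt (gM j (L ^ M *: y)).
    rewrite h1; last by apply/Vcx_E; exists x.
    by rewrite h2 ?ev //; apply/Vcx_E; exists y.
  rewrite !hlt; try by apply: gMV; apply: VxM.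
  by move/(hli _ _ (gMV _ _ (VxM _ hx)) (gMV _ _ (VxM _ hy))) => e'; rewrite !ghE e'.
have hg0V : forall x, V0 x -> gh i0 x = x.
  move=> x hx; rewrite ghE.
  have hv : Vcx L nu M (sc (L ^ (M + 1)) (nu i0)) (L ^ M *: x + sc (L ^ (M + 1)) (nu i0)).
    by apply/Vcx_E; exists x.
  have := hgl i0 _ hv; rewrite addrK nu_i0 scE scaler0 addr0.
  rewrite !hlt; [|by apply: VxM|by apply: gMV; apply: VxM].
  by move/(hli _ _ (gMV _ _ (VxM _ hx)) (VxM _ hx)) => ->; apply: scz_inv.
have hg0 : forall p, gh i0 p = p.
  have [a [b [hab ea _]]] := (RotM0E _).1 (hgh i0).
  case: (boolP ((a == 1) && (b == 0))) => [/andP[/eqP ha /eqP hb]|hne].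
    by move=> p; rewrite ea ha hb /grot rot10 addrCA subrr addr0.
  exfalso.
  have [z1 [z2 [z3 [h1 h2 h3 [n12 n13 n23]]]]] := H3'.
  have fx : forall z, V0 z -> z = b0.
    move=> z hz; have := hg0V z hz; rewrite ea => /grot_fix /(rot_fix hab).
    by rewrite negb_and in hne => /(_ hne) /eqP; rewrite subr_eq0 => /eqP.
  by move: n12; rewrite (fx _ h1) (fx _ h2) eqxx.
pose u (m : nat) (v : pt) := L ^ (- (M + m%:Z)) *: v.
have uS : forall m k v, u (m + k)%N v = (L^-1) ^+ k *: u m v.
  move=> m k v; rewrite /u scalerA; congr (_ *: _).
  rewrite exprnP exprz_inv -LzD; apply: Lz_eq.
  by rewrite PoszD; ring.
pose F := Fold gh.
pose ell v := if pselect (exists m, Qlev m (u m v)) is left H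
  then l0 (L ^ M *: iter (projT1 (cid H)) F (u (projT1 (cid H)) v)) else l0 v.
have ellE : forall m v, Qlev m (u m v) -> ell v = l0 (L ^ M *: iter m F (u m v)).
  move=> m v hm; rewrite /ell; case: pselect => [H|nH]; last by exfalso; apply: nH; exists m.
  case: (cid H) => m0 hm0 /=.
  have E1 := lev_stepn hcons nu_i0 hg0 m hm0.
  have E2 := lev_stepn hcons nu_i0 hg0 m0 hm.
  by rewrite -uS in E1; rewrite -uS in E2; rewrite -E1 -E2 addnC.
have ellV : forall v, VMM L nu M v -> ell v = l0 v.
  move=> v /VMM_E [z hz ->].
  have e0 : u 0%N (L ^ M *: z) = z by rewrite /u addr0 -invr_expz scz_inv.
  rewrite (ellE 0%N); last by rewrite e0; exists (fun _ => i0), z.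
  by rewrite e0.
exists M, ell; split.
  by apply: bij_onto_ext Hl0 => v hv; rewrite ellV.
move=> t [n [w ->]].
have [fh [hfh efh]] := Fold_main hgh hcons n.+1 w.
exists (zconj M fh); split.
  by have := RotM_scale M hfh; rewrite add0r.
move=> v /Vcx_E [z hz ->].
have et : \sum_(j < n.+1) sc (L ^ (M + 1 + (j : nat)%:Z)) (nu (w j)) =
    L ^ M *: \sum_(j < n.+1) L ^+ j.+1 *: nu (w j).
  rewrite scaler_sumr; apply: eq_bigr => j _.
  rewrite scE scalerA exprnP -LzD; congr (_ *: _); apply: Lz_eq.
  by rewrite -addrA; congr (_ + _); rewrite -[in RHS](addn1 j) PoszD addrC.
have Eu : u n.+1 (L ^ M *: z + \sum_(j < n.+1) sc (L ^ (M + 1 + (j : nat)%:Z)) (nu (w j))) = psw w n.+1 z.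
  rewrite et -scalerDr -psw_closed /u !scalerA exprnP -!LzD.
  by rewrite [X in L ^ X *: _](_ : _ = 0) ?expr0z ?scale1r //; ring.
rewrite (ellE n.+1); last by rewrite Eu; exists w, z.
rewrite Eu efh // addrK /zconj scz_inv ellV //.
by apply: VxM; apply: RotM0_V0.
Qed.

End Main.

End Frac.

Unset Implicit Arguments.

Theorem proposition3p6 (R : realType) (L : R) (N : nat) (nu : 'I_N -> (R * R)%type)
  (K : set (R * R)%type) (HK : simple_nested_fractal L nu K)
  (A : finType) (M : int) (l0 : (R * R)%type -> A)
  (Hl0 : bij_onto (VMM L nu M) l0) :
  good_labelling_property L nu A <->
  exists lt : (R * R)%type -> A,
    (forall v, VMM L nu M v -> lt v = l0 v) /\
    forall i : 'I_N, exists f, RotM L nu M f /\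
      forall v, Vcx L nu M (sc (L ^ (M + 1)) (nu i)) v ->
        lt (f (v - sc (L ^ (M + 1)) (nu i))) = lt v.
Proof.
case: HK => [[HL HN H0] [_ _ HKe] [Hosc Hnest Hsym] [_ H3]].
have Hnu : injective nu.
  move=> i j e; apply/eqP; apply: boolp.contrapT => /negP nij.
  have [U [_ [u hu] _ _ hd]] := Hosc.
  have ePs : Psi L nu i = Psi L nu j by apply: boolp.funext => x; rewrite /Psi e.
  have := hd i j nij; rewrite ePs setIid => /seteqP [/(_ (Psi L nu j u)) h _].
  by apply: h; exists u.
split; first exact: dir_fwd.
move=> [lt [hlt hrot]].
have [gM hgM] := boolp.choice hrot.
exact: (dir_back HL Hnu Hsym H3 HKe Hnest H0 HN Hl0 hlt (fun i => (hgM i).1) (fun i => (hgM i).2)).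
Qed.
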